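(* Let $G$ be a connected graph with $\hat\delta$-thin triangles, let $u,v$ be arbitrary vertices and $\lambda$ a fixed real number. Then there exists a ball $B$ of radius $2\hat\delta$ such that for every pair of vertices $x,y$ with $d(x,u)<\lambda\,d(u,v)$ and $d(y,v)<(1-\lambda)\,d(u,v)$, every shortest path from $x$ to $y$ intersects $B$.
   Context: $G$ is regarded as a geodesic metric space (each edge an interval of length 1), with distance $d$. For vertices $a,b,c$ let $(b.c)_a=\tfrac12(d(a,b)+d(a,c)-d(b,c))$. $G$ has $\hat\delta$-thin triangles if for every triple of vertices $x_1,x_2,x_3$ and every choice of shortest paths $p_{i,j}$ between $x_i$ and $x_j$, for every $i$ with $\{j,\ell\}$ the other two indices and every $k$ with $1\le k\le (x_j.x_\ell)_{x_i}$, the points $y_k\in p_{i,j}$ and $y'_k\in p_{i,\ell}$ at distance $k$ from $x_i$ satisfy $d(y_k,y'_k)\le\hat\delta$. *)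

(* Defs.v *)
From Stdlib Require Import Reals List ClassicalEpsilon.
Import ListNotations.
Open Scope R_scope.

Section Graph.
Context {V : Type} (adj : V -> V -> Prop).

Fixpoint chain (x : V) (l : list V) : Prop :=
  match l with
  | [] => True
  | y :: l' => adj x y /\ chain y l'
  end.

(* the walk x :: l goes from x to y; its length (number of edges) is length l *)
Definition walk (x y : V) (l : list V) : Prop :=
  chain x l /\ last (x :: l) x = y.

Definition connected : Prop := forall x y : V, exists l, walk x y l.

Definition is_dist (x y : V) (n : nat) : Prop :=
  (exists l, walk x y l /\ length l = n) /\
  (forall l, walk x y l -> (n <= length l)%nat).

(* graph distance d(x,y) (meaningful when the graph is connected) *)
Definition gdist (x y : V) : nat :=
  epsilon (inhabits 0%nat) (fun n => is_dist x y n).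

Definition geodesic (x y : V) (l : list V) : Prop :=
  walk x y l /\ length l = gdist x y.

Definition gromov (a b c : V) : R :=
  (INR (gdist a b) + INR (gdist a c) - INR (gdist b c)) / 2.

(* hat-delta-thin triangles: for every triple x, y, z and shortest paths p from
   x to y and q from x to z, for every integer 1 <= k <= (y.z)_x the vertices of
   p and q at distance k from x are at distance <= delta. (Quantifying over all
   triples and all geodesics issued from the first vertex covers every index i
   and every choice of the paths p_{i,j}.) *)
Definition thin_triangles (delta : R) : Prop :=
  forall (x y z : V) (p q : list V),
    geodesic x y p -> geodesic x z q ->
    forall k : nat, (1 <= k)%nat -> INR k <= gromov x y z ->
      INR (gdist (nth k (x :: p) x) (nth k (x :: q) x)) <= delta.

End Graph.

(* Main.v *)
Require Import Defs.
From Stdlib Require Import Reals List Arith Lia Classical ClassicalEpsilon Lra.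
Import ListNotations.
Open Scope R_scope.

Lemma min_exists (P : nat -> Prop) n : P n -> exists m, P m /\ forall k, P k -> (m <= k)%nat.
Proof.
  induction n as [n IH] using lt_wf_ind. intros Hn.
  destruct (classic (exists k, (k < n)%nat /\ P k)) as [[k [Hk Pk]]|H].
  - exact (IH k Hk Pk).
  - exists n. split; auto. intros k Pk. destruct (le_lt_dec n k); auto.
    exfalso; apply H; eauto.
Qed.

Section G.
Context {V : Type} (adj : V -> V -> Prop)
  (adj_sym : forall a b, adj a b -> adj b a)
  (Hconn : connected adj).

Lemma last_def (a : V) t d d' : last (a::t) d = last (a::t) d'.
Proof. revert a; induction t as [|b t IH]; intros a; [reflexivity| apply (IH b)]. Qed.

Lemma walk_app x y z l1 l2 : walk adj x y l1 -> walk adj y z l2 -> walk adj x z (l1 ++ l2).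
Proof.
  revert x; induction l1 as [|a t IH]; intros x [H1 H2] H3.
  - simpl in H2; subst; exact H3.
  - destruct H1 as [Ha Hc]. assert (walk adj a y t).
    { split; auto. change (last (a::t) x = y) in H2. rewrite <- H2. apply last_def. }
    destruct (IH a H H3) as [C L]. split. simpl. split; auto.
    simpl app. change (last (x :: a :: t ++ l2) x) with (last (a :: t ++ l2) x).
    rewrite <- L. apply last_def.
Qed.

Lemma walk_rev x y l : walk adj x y l -> exists r, walk adj y x r /\ y :: r = rev (x :: l).
Proof.
  revert x; induction l as [|a t IH]; intros x [H1 H2].
  - simpl in H2; subst. exists []. split; [split; simpl; auto|reflexivity].
  - destruct H1 as [Ha Hc]. assert (walk adj a y t).
    { split; auto. change (last (a::t) x = y) in H2. rewrite <- H2. apply last_def. }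
    destruct (IH a H) as [r' [W E]]. exists (r' ++ [x]). split.
    + apply walk_app with a; auto. split; simpl; auto.
    + change (rev (x :: a :: t)) with (rev (a :: t) ++ [x]). rewrite <- E. reflexivity.
Qed.

Lemma gdist_spec x y : is_dist adj x y (gdist adj x y).
Proof.
  unfold gdist. apply epsilon_spec.
  destruct (Hconn x y) as [l Hl].
  destruct (min_exists (fun n => exists l, walk adj x y l /\ length l = n) (length l))
    as [m [Hm Hmin]]; eauto.
  exists m. split; auto. intros l' Hl'. apply Hmin. eauto.
Qed.

Lemma geo_exists x y : exists l, geodesic adj x y l.
Proof. destruct (gdist_spec x y) as [[l [W L]] _]. exists l; split; auto. Qed.

Lemma dist_le x y l : walk adj x y l -> (gdist adj x y <= length l)%nat.
Proof. intros W. apply (proj2 (gdist_spec x y)); auto. Qed.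

Lemma dist_tri x y z : (gdist adj x z <= gdist adj x y + gdist adj y z)%nat.
Proof.
  destruct (geo_exists x y) as [l1 [W1 L1]]. destruct (geo_exists y z) as [l2 [W2 L2]].
  rewrite <- L1, <- L2, <- length_app. apply dist_le. eapply walk_app; eauto.
Qed.

Lemma dist_sym x y : gdist adj x y = gdist adj y x.
Proof.
  assert (forall a b, (gdist adj a b <= gdist adj b a)%nat).
  { intros a b. destruct (geo_exists b a) as [l [W L]]. destruct (walk_rev _ _ _ W) as [r [W' E]].
    rewrite <- L. assert (length (a :: r) = length (b :: l)) by (rewrite E; apply length_rev).
    simpl in H. injection H as H. rewrite <- H. apply dist_le; auto. }
  apply Nat.le_antisymm; auto.
Qed.

Lemma geo_rev x y l : geodesic adj x y l -> exists r, geodesic adj y x r /\ y :: r = rev (x :: l).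
Proof.
  intros [W L]. destruct (walk_rev _ _ _ W) as [r [W' E]]. exists r. split; auto. split; auto.
  assert (length (y :: r) = length (x :: l)) by (rewrite E; apply length_rev).
  simpl in H. injection H as H. rewrite dist_sym. lia.
Qed.

Lemma dist0 x y : gdist adj x y = 0%nat -> x = y.
Proof.
  intros H. destruct (geo_exists x y) as [l [[C La] L]]. rewrite H in L.
  destruct l; [simpl in La; auto | discriminate].
Qed.

Lemma dist_refl x : gdist adj x x = 0%nat.
Proof. pose proof (dist_le x x [] (conj I eq_refl)). simpl in H. lia. Qed.

Lemma nth_last (x : V) l : nth (length l) (x :: l) x = last (x :: l) x.
Proof.
  revert x; induction l as [|a t IH]; intros x; auto.
  simpl length. change (nth (S (length t)) (x :: a :: t) x) with (nth (length t) (a :: t) x).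
  change (last (x :: a :: t) x) with (last (a :: t) x).
  rewrite (last_def a t x a), <- IH. apply nth_indep. simpl; lia.
Qed.

Lemma in_last (x : V) l : In (last (x :: l) x) (x :: l).
Proof.
  revert x; induction l as [|a t IH]; intros x; [left; auto|].
  change (In (last (a :: t) x) (x :: a :: t)).
  right. rewrite (last_def a t x a). apply IH.
Qed.

End G.

Lemma k_exists (r : R) : 0 < r -> exists k : nat, INR k < r /\ forall n, INR n < r -> (n <= k)%nat.
Proof.
  intros Hr. destruct (INR_unbounded r) as [N HN].
  destruct (min_exists (fun n => r <= INR n) N) as [m [Hm Hmin]]; [lra|].
  destruct m as [|k]. { simpl in Hm; lra. }
  exists k. split.
  - destruct (Rlt_le_dec (INR k) r); auto. specialize (Hmin k r0). lia.
  - intros n Hn. destruct (le_lt_dec (S k) n); [|lia].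
    apply le_INR in l. lra.
Qed.

Theorem mainTheorem8 (V : Type) (adj : V -> V -> Prop)
  (adj_sym : forall a b, adj a b -> adj b a)
  (adj_irrefl : forall a, ~ adj a a)
  (Hconn : connected adj)
  (delta : R) (Hthin : thin_triangles adj delta)
  (u v : V) (lambda : R) :
  exists c : V,
    forall x y : V,
      INR (gdist adj x u) < lambda * INR (gdist adj u v) ->
      INR (gdist adj y v) < (1 - lambda) * INR (gdist adj u v) ->
      forall l : list V, geodesic adj x y l ->
        exists w, In w (x :: l) /\ INR (gdist adj c w) <= 2 * delta.
Proof.
  destruct (geo_exists adj Hconn u v) as [pv Hpv].
  set (D := gdist adj u v) in *.
  destruct (Rlt_le_dec 0 (lambda * INR D)) as [Hr|Hr]; cycle 1.
  { exists u. intros x y Hx. pose proof (pos_INR (gdist adj x u)). lra. }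
  destruct (k_exists _ Hr) as [k [Hk Hkmax]].
  exists (nth k (u :: pv) u). intros x y Hx Hy l Hl.
  pose proof (pos_INR (gdist adj x u)). pose proof (pos_INR (gdist adj y v)).
  assert (HD : 0 < INR D) by lra.
  assert (Hxu : (gdist adj u x <= k)%nat) by (rewrite (dist_sym adj adj_sym Hconn); auto).
  assert (Hdel : 0 <= delta).
  { assert (D <> 0%nat) by (intro E; rewrite E in HD; simpl in HD; lra).
    pose proof (Hthin u v v pv pv Hpv Hpv 1%nat (le_n 1)) as T.
    assert (INR 1 <= gromov adj u v v).
    { unfold gromov. rewrite (dist_refl adj Hconn). fold D. simpl INR.
      assert (1 <= INR D) by (apply (le_INR 1); lia). lra. }
    specialize (T H2). pose proof (pos_INR (gdist adj (nth 1 (u :: pv) u) (nth 1 (u :: pv) u))). lra. }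
  destruct k as [|k'].
  { assert (x = u) by (symmetry; apply (dist0 adj Hconn); lia). subst x.
    exists u. split; [left; auto|]. simpl nth. rewrite (dist_refl adj Hconn). simpl; lra. }
  set (k := S k') in *.
  destruct (geo_exists adj Hconn u y) as [pu Hpu].
  set (Duy := gdist adj u y) in *.
  pose proof (dist_tri adj Hconn u y v) as T1. fold D Duy in T1.
  apply le_INR in T1. rewrite plus_INR in T1.
  assert (HkDuy : INR k < INR Duy) by lra.
  assert (HkDuy' : (k < Duy)%nat) by (apply INR_lt; auto).
  pose proof (Hthin u v y pv pu Hpv Hpu k ltac:(unfold k; lia)) as S1.
  assert (INR k <= gromov adj u v y) as G1.
  { unfold gromov. rewrite (dist_sym adj adj_sym Hconn v y). fold D Duy. lra. }
  specialize (S1 G1). set (P := nth k (u :: pu) u) in *.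
  assert (Hdxy := dist_tri adj Hconn u x y). fold Duy in Hdxy.
  apply le_INR in Hdxy. rewrite plus_INR in Hdxy. apply le_INR in Hxu.
  destruct (geo_rev adj adj_sym Hconn _ _ _ Hpu) as [ru [Hru Eru]].
  destruct (geo_rev adj adj_sym Hconn _ _ _ Hl) as [rl [Hrl Erl]].
  set (m := (Duy - k)%nat).
  destruct (Nat.eq_dec m 0) as [Hm0|Hm0].
  { lia. }
  pose proof (Hthin y u x ru rl Hru Hrl m ltac:(lia)) as S2.
  assert (INR m <= gromov adj y u x) as G2.
  { unfold gromov. unfold m. rewrite minus_INR by lia.
    rewrite (dist_sym adj adj_sym Hconn y u), (dist_sym adj adj_sym Hconn y x). fold Duy. lra. }
  specialize (S2 G2).
  assert (EP : nth m (y :: ru) y = P).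
  { rewrite Eru. destruct Hpu as [_ Lpu]. rewrite rev_nth by (simpl; unfold m; lia).
    unfold P. simpl length. replace (S (length pu) - S m)%nat with k by (unfold m; lia).
    apply nth_indep. simpl; lia. }
  rewrite EP in S2.
  exists (nth m (y :: rl) y). split.
  - destruct (nth_in_or_default m (y :: rl) y) as [I|I].
    + rewrite Erl in I |- *. apply (proj2 (in_rev _ _)) in I. exact I.
    + rewrite I. destruct Hl as [[_ La] _]. rewrite <- La. apply in_last.
  - pose proof (dist_tri adj Hconn (nth k (u :: pv) u) P (nth m (y :: rl) y)) as T.
    apply le_INR in T. rewrite plus_INR in T. lra.
Qed.
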